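(* Let $G$ be a graph with no proper 1-join, let $u$ be a 1-cutset of $G$, let $C$ be a connected component of $G\setminus\{u\}$, and let $\overline{C}=C\cup\{u\}$ (as an induced subgraph of $G$). Then $\overline{C}$ has no proper 1-join.
   Context: All graphs are finite and simple. A connected graph $G$ has a 1-cutset $u$ if $G\setminus\{u\}$ has at least two connected components. A 1-join of $G$ is a partition of $V(G)$ into sets $X,Y$ with $|X|,|Y|\ge2$ such that there exist nonempty $A\subseteq X$ and $B\subseteq Y$ with $A$ complete to $B$ (all edges present), $X$ anticomplete to $Y\setminus B$ (no edges), and $Y$ anticomplete to $X\setminus A$; it is denoted $(X,Y,A,B)$. A 1-join $(X,Y,A,B)$ is proper if $A$ and $B$ are stable sets of size at least 2. *)

(* Defs.v *)
(* A finite simple graph is a symmetric irreflexive relation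
   [e] on a finite type [T]; an induced subgraph is given by a vertex set. *)
From mathcomp Require Import all_boot.
Set Implicit Arguments.
Unset Strict Implicit.
Unset Printing Implicit Defensive.

Section Graphs.
Variable T : finType.
Variable e : rel T.

Definition simple_graph : Prop := symmetric e /\ irreflexive e.

Definition induced_rel (S : {set T}) : rel T :=
  fun a b => [&& a \in S, b \in S & e a b].

Definition connected_graph : Prop :=
  forall x y : T, connect e x y.

Definition is_component (S C : {set T}) : Prop :=
  exists2 x, x \in S & C = [set y | y \in S & connect (induced_rel S) x y].

Definition one_cutset (u : T) : Prop :=
  connected_graph /\
  exists C1 C2 : {set T}, [/\ is_component (~: [set u]) C1,
                             is_component (~: [set u]) C2 & C1 != C2].

Definition complete_to (A B : {set T}) : Prop :=
  forall a b, a \in A -> b \in B -> e a b.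

Definition anticomplete_to (A B : {set T}) : Prop :=
  forall a b, a \in A -> b \in B -> ~~ e a b.

Definition stable (A : {set T}) : Prop :=
  forall a b, a \in A -> b \in A -> ~~ e a b.

Definition one_join (V X Y A B : {set T}) : Prop :=
  [/\ [/\ X :|: Y = V, X :&: Y = set0, 2 <= #|X| & 2 <= #|Y|],
      [/\ A \subset X, B \subset Y, A != set0 & B != set0],
      complete_to A B,
      anticomplete_to X (Y :\: B) &
      anticomplete_to Y (X :\: A)].

Definition proper_one_join (V X Y A B : {set T}) : Prop :=
  [/\ one_join V X Y A B, stable A, stable B, 2 <= #|A| & 2 <= #|B|].

Definition has_proper_one_join (V : {set T}) : Prop :=
  exists X Y A B, proper_one_join V X Y A B.

End Graphs.

(* Main.v *)
Require Import Defs.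
From mathcomp Require Import all_boot.
Lemma swap_pj (T : finType) (e : rel T) V X Y A B :
  symmetric e -> proper_one_join e V X Y A B -> proper_one_join e V Y X B A.
Proof.
move=> sym [[[XY XI cX cY] [sA sB nA nB] cAB an1 an2] stA stB cA cB].
split; [|exact: stB|exact: stA|exact: cB|exact: cA].
split; [|by split|idtac|exact: an2|exact: an1].
- by split; [rewrite setUC|rewrite setIC|exact: cY|exact: cX].
- by move=> a b aB bA; rewrite sym; apply: cAB.
Qed.
Lemma ext_pj (T : finType) (e : rel T) V X Y A B :
  symmetric e -> proper_one_join e V X Y A B ->
  (forall y x, y \in Y -> x \notin V -> ~~ e y x) ->
  proper_one_join e [set: T] (X :|: ~: V) Y A B.
Proof.
move=> sym [[[XY XI cX cY] [sA sB nA nB] cAB an1 an2] stA stB cA cB] H.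
have YV : Y \subset V by rewrite -XY subsetUr.
split; [|exact: stA|exact: stB|exact: cA|exact: cB].
split; [|split|exact: cAB|idtac|idtac].
- split; [idtac|idtac|idtac|exact: cY].
  + apply/setP=> x; rewrite !inE -XY !inE.
    by case: (x \in X); case: (x \in Y).
  + apply/setP=> x; rewrite !inE; apply/negbTE.
    case xY: (x \in Y); last by rewrite andbF.
    rewrite andbT; apply/norP; split.
    * apply/negP=> xX.
      have : x \in X :&: Y by rewrite inE xX xY.
      by rewrite XI inE.
    * by rewrite negbK (subsetP YV).
  + by apply: leq_trans cX _; apply: subset_leq_card; apply: subsetUl.
- apply: subset_trans sA _; apply: subsetUl.
- exact: sB.
- exact: nA.
- exact: nB.
- move=> a b; rewrite inE => /orP [aX|aV] bYB.
    by apply: an1.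
  rewrite sym; apply: H; first by move: bYB; rewrite inE => /andP [].
  by move: aV; rewrite inE.
- move=> a b aY; rewrite !inE => /andP [bA /orP [bX|bV]].
    by apply: an2 => //; rewrite inE bA bX.
  by apply: H.
Qed.
Theorem mainTheorem8 (T : finType) (e : rel T) (u : T) (C : {set T}) :
  simple_graph e ->
  ~ has_proper_one_join e [set: T] ->
  one_cutset e u ->
  is_component e (~: [set u]) C ->
  ~ has_proper_one_join e (u |: C).
Proof.
move=> [sym irr] noG _ [x0 x0S defC] [X [Y [A [B pj]]]].
have key : forall c r, c \in C -> r \notin u |: C -> ~~ e c r.
  move=> c r cC; rewrite !inE negb_or => /andP [ru rC]; apply/negP=> ecr.
  move: (cC); rewrite defC inE => /andP [cS cx].
  move/negP: rC; apply; rewrite defC inE.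
  have rS : r \in ~: [set u] by rewrite !inE.
  rewrite rS /=; apply: connect_trans cx _; apply: connect1.
  by rewrite /induced_rel cS rS ecr.
have [[[XY XI _ _] _ _ _ _] _ _ _ _] := pj.
case uX: (u \in X).
- apply: noG; exists (X :|: ~: (u |: C)), Y, A, B; apply: ext_pj => // y x yY xV.
  apply: key => //.
  have : y \in u |: C by rewrite -XY inE yY orbT.
  rewrite !inE => /orP [/eqP yu|//].
  have : y \in X :&: Y by rewrite inE yY andbT yu.
  by rewrite XI inE.
- apply: noG; exists (Y :|: ~: (u |: C)), X, B, A; apply: ext_pj.
  + exact: sym.
  + by apply: swap_pj.
  move=> y x yX xV; apply: key => //.
  have : y \in u |: C by rewrite -XY inE yX.
  rewrite !inE => /orP [/eqP yu|//].
  by move: uX; rewrite -yu yX.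
Qed.
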